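(* The lattice $K$ (defined in the context) is infinite, is generated as a lattice by the three elements $a=A_0$, $b=B_0$, $c=C$, and is $2$-modular.
   Context: Let $P=\{c\}\cup\{a_n:n<\omega\}\cup\{b_n:n<\omega\}$ be a set of distinct symbols. For $m,n<\omega$ put $A_m=\{a_k:k\geq m\}$, $B_n=\{b_k:k\geq n\}$, $C=\{c\}$. The lattice $K$ is the set consisting of $\varnothing$, $C$, all $A_m$, all $B_n$ ($m,n<\omega$), and all sets $C\cup A_m\cup B_n$ with $m,n<\omega$ and $|m-n|\leq 1$, ordered by inclusion (meets are intersections; $\varnothing$ is the zero and $C\cup A_0\cup B_0$ is the top). Equivalently, $K$ has join-irreducible elements $c$, $a_n$, $b_n$ ($n<\omega$) with $a_0>a_1>a_2>\cdots$, $b_0>b_1>\cdots$, these chains and $c$ mutually incomparable, and the only nontrivial join-covers among them being $c<a_m\vee b_n$, $a_{m}<b_n\vee c$ and $b_{m}<a_n\vee c$ for $m>n$. For a lattice $L$, define $u\mapsto u^{(1)}$ on $L^3$ by $\langle x,y,z\rangle^{(1)}=\langle x\vee(y\wedge z),\,y\vee(x\wedge z),\,z\vee(x\wedge y)\rangle$, and $u^{(0)}=u$, $u^{(k+1)}=(u^{(k)})^{(1)}$. For a positive integer $h$, $L$ is $h$-modular if $u^{(h+1)}=u^{(h)}$ for all $u\in L^3$. *)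

(* Defs.v *)
From Stdlib Require Import Arith List.

Inductive P : Type :=
| pc : P
| pa : nat -> P
| pb : nat -> P.

Definition Kset := P -> Prop.

Definition Empty : Kset := fun _ => False.
Definition Cset : Kset := fun p => p = pc.
Definition Aset (m : nat) : Kset :=
  fun p => match p with pa k => m <= k | _ => False end.
Definition Bset (n : nat) : Kset :=
  fun p => match p with pb k => n <= k | _ => False end.
Definition CAB (m n : nat) : Kset :=
  fun p => Cset p \/ Aset m p \/ Bset n p.

Definition inK (X : Kset) : Prop :=
  X = Empty \/ X = Cset \/ (exists m, X = Aset m) \/ (exists n, X = Bset n)
  \/ (exists m n, (m <= n + 1 /\ n <= m + 1) /\ X = CAB m n).

Definition subset (X Y : Kset) : Prop := forall p, X p -> Y p.

Definition meetK (X Y : Kset) : Kset := fun p => X p /\ Y p.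
Definition joinK (X Y : Kset) : Kset :=
  fun p => forall Z, inK Z -> subset X Z -> subset Y Z -> Z p.

Inductive gen_abc : Kset -> Prop :=
| gen_a : gen_abc (Aset 0)
| gen_b : gen_abc (Bset 0)
| gen_c : gen_abc Cset
| gen_meet : forall X Y, gen_abc X -> gen_abc Y -> gen_abc (meetK X Y)
| gen_join : forall X Y, gen_abc X -> gen_abc Y -> gen_abc (joinK X Y).

Definition step (u : Kset * Kset * Kset) : Kset * Kset * Kset :=
  let '(x, y, z) := u in
  (joinK x (meetK y z), joinK y (meetK x z), joinK z (meetK x y)).

Fixpoint iter_step (k : nat) (u : Kset * Kset * Kset) : Kset * Kset * Kset :=
  match k with
  | 0 => u
  | S k' => step (iter_step k' u)
  end.

Definition h_modular_K (h : nat) : Prop :=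
  forall x y z, inK x -> inK y -> inK z ->
    iter_step (S h) (x, y, z) = iter_step h (x, y, z).

Definition K_infinite : Prop :=
  ~ exists l : list Kset, forall X, inK X -> In X l.

(* Main.v *)
Require Import Defs.
From Stdlib Require Import Arith List Lia.
From Stdlib Require Import FunctionalExtensionality PropExtensionality Classical.

Inductive code := cE | cC | cA (m:nat) | cB (n:nat) | cT (m n:nat).
Definition wf (x:code) := match x with cT m n => m <= S n /\ n <= S m | _ => True end.
Definition cmeet x y := match x, y with
 | cE, _ => cE | _, cE => cE
 | cC, cC => cC | cC, cA _ => cE | cC, cB _ => cE | cC, cT _ _ => cC
 | cA _, cC => cE | cB _, cC => cE | cT _ _, cC => cC
 | cA m, cA m' => cA (Nat.max m m') | cA _, cB _ => cE | cA m, cT m' _ => cA (Nat.max m m')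
 | cB _, cA _ => cE | cB n, cB n' => cB (Nat.max n n') | cB n, cT _ n' => cB (Nat.max n n')
 | cT m' _, cA m => cA (Nat.max m' m) | cT _ n', cB n => cB (Nat.max n' n)
 | cT m n, cT m' n' => cT (Nat.max m m') (Nat.max n n') end.
Definition cjoin x y := match x, y with
 | cE, y => y | x, cE => x
 | cC, cC => cC | cC, cA m => cT m (S m) | cC, cB n => cT (S n) n | cC, cT m n => cT m n
 | cA m, cC => cT m (S m) | cB n, cC => cT (S n) n | cT m n, cC => cT m n
 | cA m, cA m' => cA (Nat.min m m')
 | cA m, cB n => cT (Nat.min m (S n)) (Nat.min n (S m))
 | cB n, cA m => cT (Nat.min m (S n)) (Nat.min n (S m))
 | cA m, cT m' n' => cT (Nat.min m m') (Nat.min n' (S (Nat.min m m')))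
 | cT m' n', cA m => cT (Nat.min m' m) (Nat.min n' (S (Nat.min m' m)))
 | cB n, cB n' => cB (Nat.min n n')
 | cB n, cT m' n' => cT (Nat.min m' (S (Nat.min n n'))) (Nat.min n n')
 | cT m' n', cB n => cT (Nat.min m' (S (Nat.min n' n))) (Nat.min n' n)
 | cT m n, cT m' n' => cT (Nat.min m m') (Nat.min n n') end.
Definition cstep (u : code*code*code) := let '(x,y,z) := u in
  (cjoin x (cmeet y z), cjoin y (cmeet x z), cjoin z (cmeet x y)).

Lemma wfT m n : m <= S n /\ n <= S m -> n = m \/ n = S m \/ m = S n.
Proof. lia. Qed.

Ltac nomm t := lazymatch t with
 | context [Nat.min _ _] => fail | context [Nat.max _ _] => fail | _ => idtac end.


Ltac splitmm1 := match goal with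
 | |- context [Nat.min ?a ?b] => nomm a; nomm b;
   first [ let H := fresh in assert (H: a <= b) by lia; rewrite (Nat.min_l a b H); clear H
         | let H := fresh in assert (H: b <= a) by lia; rewrite (Nat.min_r a b H); clear H
         | let H := fresh in destruct (Nat.le_ge_cases a b) as [H|H];
     [rewrite (Nat.min_l a b H) | rewrite (Nat.min_r a b H)] ]
 | |- context [Nat.max ?a ?b] => nomm a; nomm b;
   first [ let H := fresh in assert (H: a <= b) by lia; rewrite (Nat.max_r a b H); clear H
         | let H := fresh in assert (H: b <= a) by lia; rewrite (Nat.max_l a b H); clear H
         | let H := fresh in destruct (Nat.le_ge_cases a b) as [H|H];
     [rewrite (Nat.max_r a b H) | rewrite (Nat.max_l a b H)] ]
 end.
Ltac splitmm := repeat splitmm1.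
Ltac wfsub := repeat match goal with
 | H : ?m <= S ?n /\ ?n <= S ?m |- _ => destruct (wfT m n H) as [->|[->| ->]]; clear H
 end.

Lemma brute x y z : wf x -> wf y -> wf z ->
  cstep (cstep (cstep (x,y,z))) = cstep (cstep (x,y,z)).
Proof.
destruct x, y, z; cbn [wf]; intros; wfsub; cbn [cstep cjoin cmeet]; splitmm; try reflexivity.
Qed.

Definition den (x : code) : Kset := match x with
 | cE => Empty | cC => Cset | cA m => Aset m | cB n => Bset n | cT m n => CAB m n end.

Definition cle x y := match x, y with
 | cE, _ => True
 | cC, cC => True | cC, cT _ _ => True
 | cA m, cA m' => m' <= m | cA m, cT m' _ => m' <= m
 | cB n, cB n' => n' <= n | cB n, cT _ n' => n' <= n
 | cT m n, cT m' n' => m' <= m /\ n' <= n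
 | _, _ => False end.

Lemma sub_cle x y : subset (den x) (den y) -> cle x y.
Proof.
unfold subset; destruct x as [| |m|n|m n]; destruct y; cbn; intros H; auto;
repeat match goal with
 | H : forall p, Cset p -> _ |- _ => specialize (H pc eq_refl)
 | H : forall p, Aset ?m p -> _ |- _ => specialize (H (pa m) (le_n m))
 | H : forall p, Bset ?m p -> _ |- _ => specialize (H (pb m) (le_n m))
 | H : forall p, CAB ?m ?n p -> _ |- _ =>
    pose proof (H pc (or_introl eq_refl)); pose proof (H (pa m) (or_intror (or_introl (le_n m))));
    pose proof (H (pb n) (or_intror (or_intror (le_n n)))); clear H
 end; unfold Cset, Aset, Bset, CAB in *; cbn in *; intuition (try discriminate; try lia).
Qed.

Lemma cle_sub x y : cle x y -> subset (den x) (den y).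
Proof.
unfold subset; destruct x, y; cbn; intros H p; try contradiction;
unfold Empty, Cset, Aset, Bset, CAB; destruct p; cbn in *; intuition (try discriminate; try lia).
Qed.

Lemma wf_join x y : wf x -> wf y -> wf (cjoin x y).
Proof. destruct x, y; cbn; intros; lia. Qed.
Lemma wf_meet x y : wf x -> wf y -> wf (cmeet x y).
Proof. destruct x, y; cbn; intros; lia. Qed.
Lemma cle_join_l x y : cle x (cjoin x y).
Proof. destruct x, y; cbn; lia. Qed.
Lemma cle_join_r x y : cle y (cjoin x y).
Proof. destruct x, y; cbn; lia. Qed.
Lemma join_least x y z : wf z -> cle x z -> cle y z -> cle (cjoin x y) z.
Proof. destruct x, y, z; cbn; intros; lia. Qed.

Lemma inK_den X : inK X <-> exists x, wf x /\ X = den x.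
Proof.
split.
- intros [->|[->|[[m ->]|[[n ->]|[m [n [Hw ->]]]]]]].
  + exists cE; cbn; auto.
  + exists cC; cbn; auto.
  + exists (cA m); cbn; auto.
  + exists (cB n); cbn; auto.
  + exists (cT m n); cbn; split; [lia|auto].
- intros [x [Hw ->]]; destruct x; cbn in *; unfold inK; eauto 10.
  right; right; right; right; exists m, n; split; [lia|auto].
Qed.

Lemma Kext (X Y : Kset) : (forall p, X p <-> Y p) -> X = Y.
Proof. intros H; extensionality p; apply propositional_extensionality; auto. Qed.

Lemma meet_den x y : meetK (den x) (den y) = den (cmeet x y).
Proof.
apply Kext; intros p; unfold meetK;
destruct x, y; cbn; unfold Empty, Cset, Aset, Bset, CAB; destruct p; cbn in *; intuition (try discriminate; try lia).
Qed.

Lemma join_den x y : wf x -> wf y -> joinK (den x) (den y) = den (cjoin x y).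
Proof.
intros Hx Hy; apply Kext; intros p; unfold joinK; split.
- intros H; apply H.
  + apply inK_den; exists (cjoin x y); split; auto using wf_join.
  + apply cle_sub, cle_join_l.
  + apply cle_sub, cle_join_r.
- intros Hp Z HZ H1 H2. apply inK_den in HZ as [z [Hz ->]].
  apply sub_cle in H1; apply sub_cle in H2.
  exact (cle_sub _ _ (join_least _ _ _ Hz H1 H2) p Hp).
Qed.

Definition dent (t : code * code * code) : Kset * Kset * Kset :=
  let '(x, y, z) := t in (den x, den y, den z).
Definition wf3 (t : code * code * code) := let '(x, y, z) := t in wf x /\ wf y /\ wf z.

Lemma wf3_step t : wf3 t -> wf3 (cstep t).
Proof. destruct t as [[x y] z]; cbn; intros (?&?&?); auto 10 using wf_join, wf_meet. Qed.

Lemma step_den t : wf3 t -> step (dent t) = dent (cstep t).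
Proof.
destruct t as [[x y] z]; cbn; intros (?&?&?).
rewrite !meet_den, !join_den; auto using wf_meet.
Qed.

Fixpoint citer k t := match k with 0 => t | S k => cstep (citer k t) end.

Lemma citer_wf k t : wf3 t -> wf3 (citer k t).
Proof. induction k; cbn; auto using wf3_step. Qed.

Lemma iter_den k t : wf3 t -> iter_step k (dent t) = dent (citer k t).
Proof.
induction k; cbn; intros; auto.
rewrite IHk by auto. apply step_den, citer_wf; auto.
Qed.

Lemma Aset_inj m k : Aset m = Aset k -> m = k.
Proof.
intros H.
assert (Aset k (pa m)) by (rewrite <- H; cbn; lia).
assert (Aset m (pa k)) by (rewrite H; cbn; lia).
cbn in *; lia.
Qed.

Lemma list_bound (l : list Kset) : exists N, forall m, N <= m -> ~ In (Aset m) l.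
Proof.
induction l as [|X l [N HN]].
- exists 0; intros m _ [].
- destruct (classic (exists k, X = Aset k)) as [[k ->]|Hn].
  + exists (Nat.max N (S k)); intros m Hm [E|E].
    * apply Aset_inj in E; lia.
    * apply (HN m); auto; lia.
  + exists N; intros m Hm [E|E]; [apply Hn; eauto | apply (HN m); auto].
Qed.

Lemma gen_meet' x y : gen_abc (den x) -> gen_abc (den y) -> gen_abc (den (cmeet x y)).
Proof. intros; rewrite <- meet_den; constructor; auto. Qed.
Lemma gen_join' x y : wf x -> wf y -> gen_abc (den x) -> gen_abc (den y) -> gen_abc (den (cjoin x y)).
Proof. intros; rewrite <- join_den by auto; constructor; auto. Qed.

Lemma gen_AB m : gen_abc (den (cA m)) /\ gen_abc (den (cB m)).
Proof.
induction m as [|m [IA IB]].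
- split; constructor.
- split.
  + change (cA (S m)) with (cmeet (cA 0) (cjoin (cB m) cC)).
    apply gen_meet'; [constructor|]. apply gen_join'; cbn; auto. constructor.
  + change (cB (S m)) with (cmeet (cB 0) (cjoin (cA m) cC)).
    apply gen_meet'; [constructor|]. apply gen_join'; cbn; auto. constructor.
Qed.

Lemma gen_all x : wf x -> gen_abc (den x).
Proof.
destruct x; cbn [wf]; intros Hw.
- change cE with (cmeet (cA 0) (cB 0)). apply gen_meet'; constructor.
- constructor.
- apply gen_AB.
- apply gen_AB.
- replace (cT m n) with (cjoin (cA m) (cB n)).
  + apply gen_join'; cbn; auto; apply gen_AB.
  + cbn; f_equal; lia.
Qed.

Theorem theorem4p5 :
  K_infinite /\ (forall X, inK X <-> gen_abc X) /\ h_modular_K 2.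
Proof.
split; [|split].
- intros [l Hl]. destruct (list_bound l) as [N HN].
  apply (HN N (le_n N)), Hl. right; right; left; eauto.
- intros X; split.
  + intros H; apply inK_den in H as [x [Hw ->]]; apply gen_all; auto.
  + intros H; induction H.
    * apply inK_den; exists (cA 0); cbn; auto.
    * apply inK_den; exists (cB 0); cbn; auto.
    * apply inK_den; exists cC; cbn; auto.
    * apply inK_den in IHgen_abc1 as [x [Hx ->]]; apply inK_den in IHgen_abc2 as [y [Hy ->]].
      apply inK_den; exists (cmeet x y); rewrite meet_den; auto using wf_meet.
    * apply inK_den in IHgen_abc1 as [x [Hx ->]]; apply inK_den in IHgen_abc2 as [y [Hy ->]].
      apply inK_den; exists (cjoin x y); rewrite join_den; auto using wf_join.
- intros X Y Z HX HY HZ.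
  apply inK_den in HX as [x [Hx ->]]; apply inK_den in HY as [y [Hy ->]];
  apply inK_den in HZ as [z [Hz ->]].
  change (den x, den y, den z) with (dent (x, y, z)).
  assert (Hw : wf3 (x, y, z)) by (cbn; auto).
  rewrite !iter_den by auto.
  cbn [citer]. rewrite brute; auto.
Qed.
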